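(* Let $\mathcal{X}$ be a Polish space, let $Q$ be a probability transition kernel on $\mathcal{X}$, and let $\mathcal{X}_n\in\mathcal{B}(\mathcal{X})$, $n\in\mathbb{N}$, be a non-decreasing sequence of Borel sets with $\mathcal{X}_0\neq\emptyset$. Assume there exist a non-increasing sequence $\alpha_n\in(0,1]$ and probability measures $\nu_n$ on $\mathcal{B}(\mathcal{X})$, $n\in\mathbb{N}$, such that $$Q(x,A)\ge \alpha_n\nu_n(A)\quad\text{for all } A\in\mathcal{B}(\mathcal{X}),\ x\in\mathcal{X}_n,\ n\in\mathbb{N}.$$ Then there exists a probability $\mu_*$ on $\mathcal{B}(\mathcal{X})$ such that for every Markov chain $X_t$, $t\in\mathbb{N}$, with transition kernel $Q$ whose initial law $\mathcal{L}(X_0)$ belongs to $\mathfrak{P}_b$, one has $\|\mathcal{L}(X_t)-\mu_*\|_{TV}\to 0$ as $t\to\infty$.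
   Context: $\mathfrak{P}_b$ denotes the set of probabilities $\mu$ on $\mathcal{B}(\mathcal{X})$ such that, if the Markov chain $X_t$ with kernel $Q$ is started with $\mathcal{L}(X_0)=\mu$, then $\lim_{n\to\infty}\sup_{t\in\mathbb{N}}P(X_t\notin\mathcal{X}_n)=0$. For a finite signed measure $\mu$, $\|\mu\|_{TV}:=\sup_{|\phi|\le 1}|\int\phi\,d\mu|$, the supremum over measurable $\phi$ bounded by $1$ in absolute value. $\mathcal{L}(Z)$ denotes the law of $Z$. *)

(* Defs.v *)
From HB Require Import structures.
From mathcomp Require Import all_boot all_order all_algebra.
From mathcomp Require Import all_classical all_reals all_analysis.
Set Implicit Arguments. Unset Strict Implicit. Unset Printing Implicit Defensive.
Import Order.TTheory GRing.Theory Num.Theory.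
Import numFieldNormedType.Exports.
Local Open Scope classical_set_scope.
Local Open Scope ring_scope.

Definition polish (R : realType) (T : ptopologicalType) : Prop :=
  exists dist : T -> T -> R,
  (forall x y, dist x y = 0 <-> x = y) /\
      (forall x y, dist x y = dist y x) /\
      (forall x y z, dist x z <= dist x y + dist y z) /\
      (forall A : set T, open A <->
         forall x, A x -> exists2 e : R, 0 < e & [set y | dist x y < e] `<=` A) /\
      (forall u : nat -> T,
         (forall e : R, 0 < e -> exists N, forall m n, (N <= m)%N -> (N <= n)%N ->
            dist (u m) (u n) < e) ->
         exists l, forall e : R, 0 < e -> exists N, forall n, (N <= n)%N ->
            dist (u n) l < e) /\
      exists D : set T, countable D /\
        (forall A : set T, open A -> A !=set0 -> (D `&` A) !=set0).

Notation Borel T := (g_sigma_algebraType (@open T)).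

Section Defs.
Context (R : realType) (T : ptopologicalType).
Local Notation X := (Borel T).

Definition markov_chain (Q : R.-pker X ~> X) dO (Omega : measurableType dO)
    (P : probability Omega R) (Y : nat -> Omega -> X) : Prop :=
  (forall t, measurable_fun [set: Omega] (Y t)) /\
  forall (t : nat) (B : nat -> set X) (A : set X),
    (forall s, measurable (B s)) -> measurable A ->
    P ([set w | forall s, (s <= t)%N -> B s (Y s w)] `&` (Y t.+1 @^-1` A)) =
    (\int[P]_(w in [set w | forall s, (s <= t)%N -> B s (Y s w)]) Q (Y t w) A)%E.

Definition Pb (Q : R.-pker X ~> X) (Xn : nat -> set X) (mu : set X -> \bar R) : Prop :=
  forall dO (Omega : measurableType dO) (P : probability Omega R)
         (Y : nat -> Omega -> X),
    markov_chain Q P Y ->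
    (forall A, measurable A -> P (Y 0%N @^-1` A) = mu A) ->
    (fun n => ereal_sup [set P (Y t @^-1` (~` Xn n)) | t in [set: nat]])
      @ \oo --> 0%E.

Definition tv_dist (mu nu : set X -> \bar R) : \bar R :=
  ereal_sup [set `| (\int[mu]_x (phi x)%:E - \int[nu]_x (phi x)%:E)%E |%E
            | phi in [set phi : X -> R | measurable_fun [set: X] phi /\
                                         forall x, `|phi x| <= 1]].
End Defs.

(* Main.v *)
Require Import Defs.
From HB Require Import structures.
From mathcomp Require Import all_boot all_order all_algebra.
From mathcomp Require Import all_classical all_reals all_analysis.
From mathcomp Require Import ring lra zify.
Import Order.TTheory GRing.Theory Num.Theory.
Import numFieldNormedType.Exports.
Set Implicit Arguments. Unset Strict Implicit. Unset Printing Implicit Defensive.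
Local Open Scope classical_set_scope.
Local Open Scope ring_scope.

Section Basics.
Context (R : realType) (T : ptopologicalType).
Local Notation X := (Borel T).

Definition pr (m : probability X R) (A : set X) : R := fine (m A).
Definition close (m m' : probability X R) (d : R) :=
  forall A, measurable A -> `|pr m A - pr m' A| <= d.

Lemma prE (m : probability X R) A : measurable A -> m A = (pr m A)%:E.
Proof. by move=> mA; rewrite /pr fineK // fin_num_measure. Qed.

Lemma pr_ge0 (m : probability X R) A : measurable A -> 0 <= pr m A.
Proof. by move=> mA; rewrite -lee_fin -prE. Qed.

Lemma pr_le1 (m : probability X R) A : measurable A -> pr m A <= 1.
Proof. by move=> mA; rewrite -lee_fin -prE // probability_le1. Qed.

Lemma prT (m : probability X R) : pr m setT = 1.
Proof. by rewrite /pr probability_setT. Qed.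

Lemma pr_setC (m : probability X R) A : measurable A -> pr m (~` A) = 1 - pr m A.
Proof.
move=> mA; have := measureU m mA (measurableC mA).
rewrite setUv setICr => /(_ erefl) h.
have : (1%E : \bar R) = (pr m A + pr m (~` A))%:E.
  by rewrite -(probability_setT m) h EFinD -prE // -prE //; exact: measurableC.
by move=> -[->]; ring.
Qed.

Lemma bint (m : probability X R) (f : X -> R) (M : R) :
  measurable_fun setT f -> (forall x, `|f x| <= M) ->
  m.-integrable setT (EFin \o f).
Proof.
move=> mf fM; apply: measurable_bounded_integrable => //.
  exact: (le_lt_trans (probability_le1 m measurableT) (ltry _)).
exists M; split; first exact: num_real.
by move=> K MK x _ /=; apply: le_trans (fM x) (ltW MK).
Qed.

Lemma Rint_cst (m : probability X R) c : Rintegral m setT (fun _ => c) = c.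
Proof. by rewrite Rintegral_cst //; change (c * pr m setT = c); rewrite prT mulr1. Qed.

End Basics.

Section Layer.
Context (R : realType) (T : ptopologicalType).
Local Notation X := (Borel T).

Lemma sum_lt_min (N k : nat) : \sum_(j < N) ((j < k)%N)%:R = (minn N k)%:R :> R.
Proof.
elim: N => [|N IH]; first by rewrite big_ord0 min0n.
rewrite big_ord_recr /= IH -natrD; congr (_%:R); case: (ltnP N k) => h /=; lia.
Qed.

Lemma close_sym (m m' : probability X R) d : close m m' d -> close m' m d.
Proof. by move=> c A mA; rewrite distrC; exact: c. Qed.

Lemma layer_half (m m' : probability X R) d (h : X -> R) (N : nat) :
  close m m' d -> measurable_fun setT h -> (forall x, 0 <= h x <= 1) ->
  Rintegral m setT h - Rintegral m' setT h <= d + N.+1%:R^-1.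
Proof.
move=> cmm' mh h01.
set M := N.+1.
have M0 : (0 : R) < M%:R by rewrite ltr0n.
pose A (j : nat) := [set x | j.+1%:R / M%:R <= h x].
have mA j : measurable (A j).
  have -> : A j = h @^-1` `[j.+1%:R / M%:R, +oo[.
    by apply/seteqP; split => x /=; rewrite in_itv /= andbT.
  by rewrite -[X in measurable X]setTI; apply: mh => //; exact: measurable_itv.
pose s x : R := \sum_(j < M) (M%:R^-1 * \1_(A j) x).
have ms : measurable_fun setT s.
  apply: measurable_sum => j; apply: measurable_realfun.measurable_funM => //; exact: measurable_realfun.measurable_indic.
have spt x : 0 <= s x /\ s x <= h x /\ h x <= s x + M%:R^-1.
  have [h0 h1] := andP (h01 x).
  have Nh0 : 0 <= M%:R * h x by rewrite mulr_ge0 // ltW.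
  set k := Num.truncn (M%:R * h x).
  have -> : s x = M%:R^-1 * k%:R.
    rewrite /s -mulr_sumr; congr (_ * _); rewrite -(minn_idPr (_ : k <= M)%N).
      rewrite -sum_lt_min; apply: eq_bigr => j _; rewrite indicE.
      congr ((_ : bool)%:R); rewrite truncn_gt_nat.
      rewrite unfold_in /=; apply/idP/idP => [/set_mem|H]; last apply/mem_set; rewrite /A /= ?ler_pdivrMr // mulrC //.

    rewrite /k truncn_le_nat; apply: (le_lt_trans (_ : _ <= M%:R)).
      by rewrite -{2}[M%:R]mulr1 ler_wpM2l // ltW.
    by rewrite ltr_nat.
  have [kl ku] := andP (truncn_itv Nh0); rewrite -/k in kl ku.
  split; first by rewrite mulr_ge0 // invr_ge0 ltW.
  split.
    by rewrite ler_pdivrMl // mulrC ler_pdivrMr // mulrC.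
  have Mi0 : 0 <= M%:R^-1 :> R by rewrite invr_ge0 ltW.
  have := ler_wpM2l Mi0 (ltW ku).
  by rewrite mulKf ?gt_eqF // -natr1 mulrDr mulr1.
have Is (mu : probability X R) :
    Rintegral mu setT s = \sum_(j < M) M%:R^-1 * pr mu (A j).
  rewrite /Rintegral.
  under eq_integral => x _ do rewrite /s -sumEFin.
  rewrite ge0_integral_sum //; last first.
  - move=> j; apply/measurable_realfun.measurable_EFinP.
    apply: measurable_realfun.measurable_funM => //; exact: measurable_realfun.measurable_indic.
  rewrite (eq_bigr (fun j : 'I_M => (M%:R^-1 * pr mu (A j))%:E)) ?sumEFin //.
  move=> j _; under eq_integral do rewrite EFinM.
  rewrite ge0_integralZl_EFin //.
  - by rewrite integral_indic // setIT EFinM -(prE mu (mA j)).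
  - by apply/measurable_realfun.measurable_EFinP; exact: measurable_realfun.measurable_indic.
have Mi0 : 0 <= M%:R^-1 :> R by rewrite invr_ge0 ltW.
have sb x : `|s x| <= 1.
  have [s0 [sh _]] := spt x; have /andP[_ h1] := h01 x.
  by rewrite ger0_norm //; exact: le_trans sh h1.
have hb x : `|h x| <= 1 by have /andP[? ?] := h01 x; rewrite ger0_norm.
have mc : measurable_fun setT (fun _ : X => M%:R^-1 : R) by exact: measurable_cst.
have cb : forall x : X, `|M%:R^-1| <= `|M%:R^-1| :> R by [].
have up : Rintegral m setT h <= Rintegral m setT s + M%:R^-1.
  have := @le_Rintegral _ _ _ m setT h (fun x => s x + M%:R^-1) measurableT.
  rewrite RintegralD //; [|exact: bint ms sb|exact: bint mc cb].
  rewrite Rint_cst; apply.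
  - exact: bint mh hb.
  - apply: (@bint _ _ _ _ (1 + `|M%:R^-1|)).
      exact: measurable_realfun.measurable_funD.
    by move=> x; apply: le_trans (ler_normD _ _) _; rewrite lerD.
  - by move=> x _; have [? [? ?]] := spt x.
have lo : Rintegral m' setT s <= Rintegral m' setT h.
  apply: le_Rintegral => //; [exact: bint ms sb|exact: bint mh hb|].
  by move=> x _; have [? [? ?]] := spt x.
apply: le_trans (_ : Rintegral m setT s + M%:R^-1 - Rintegral m' setT s <= _).
  by rewrite lerB.
rewrite addrAC lerD2r !Is -sumrB.
apply: le_trans (_ : \sum_(j < M) M%:R^-1 * d <= _).
  apply: ler_sum => j _; rewrite -mulrBr ler_wpM2l //.
  by apply: le_trans (ler_norm _) (cmm' _ (mA j)).
rewrite sumr_const card_ord -mulrnAr -[d *+ M]mulr_natl mulKf //.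
by rewrite gt_eqF.
Qed.
End Layer.

Section Layer2.
Context (R : realType) (T : ptopologicalType).
Local Notation X := (Borel T).

Lemma small_inv (e : R) : 0 < e -> exists N : nat, N.+1%:R^-1 < e.
Proof.
move=> e0; have [N _ HN] := near_infty_natSinv_lt (PosNum e0).
by exists N; apply: (HN N) => /=.
Qed.

Lemma layer (m m' : probability X R) d (h : X -> R) :
  close m m' d -> measurable_fun setT h -> (forall x, 0 <= h x <= 1) ->
  `|Rintegral m setT h - Rintegral m' setT h| <= d.
Proof.
move=> c mh h01.
have key (mu mu' : probability X R) : close mu mu' d ->
    Rintegral mu setT h - Rintegral mu' setT h <= d.
  move=> c'; apply/ler_addgt0Pr => e e0.
  have [N HN] := small_inv e0.
  apply: le_trans (layer_half N c' mh h01) _.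
  by rewrite lerD2l ltW.
rewrite ler_norml key // andbT lerNl opprB key //.
exact: close_sym.
Qed.

End Layer2.

Section Contract.
Context (R : realType) (T : ptopologicalType).
Local Notation X := (Borel T).
Variable Q : R.-pker X ~> X.
Variable Xn : nat -> set X.
Hypothesis mXn : forall n, measurable (Xn n).
Variable alpha : nat -> R.
Hypothesis alpha_range : forall n, 0 < alpha n <= 1.
Variable nu : nat -> probability X R.
Hypothesis minor : forall n x A, Xn n x -> measurable A ->
             ((alpha n)%:E * nu n A <= Q x A)%E.

Lemma ind1 (A : set X) x : A x -> \1_A x = 1 :> R.
Proof. by move=> Ax; rewrite indicE mem_set. Qed.

Lemma ind0 (A : set X) x : ~ A x -> \1_A x = 0 :> R.
Proof. by move=> Ax; rewrite indicE memNset. Qed.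

Definition gQ (A : set X) (x : X) : R := fine (Q x A).

Lemma Qbnd x A : measurable A -> (0 <= Q x A)%E /\ (Q x A <= 1)%E.
Proof.
move=> mA; split; first exact: measure_ge0.
rewrite -(@prob_kernel _ _ _ _ _ Q x).
by apply: le_measure => //; rewrite inE.
Qed.

Lemma gQE x A : measurable A -> Q x A = (gQ A x)%:E.
Proof.
move=> mA; have [h0 h1] := Qbnd x mA.
by rewrite /gQ fineK // ge0_fin_numE // (le_lt_trans h1) // ltry.
Qed.

Lemma gQ01 x A : measurable A -> 0 <= gQ A x <= 1.
Proof. by move=> mA; have [] := Qbnd x mA; rewrite gQE // !lee_fin => -> ->. Qed.

Lemma mgQ A : measurable A -> measurable_fun setT (gQ A).
Proof.
move=> mA; apply/measurable_realfun.measurable_EFinP.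
have -> : EFin \o gQ A = fun x => Q x A by apply/funext => x /=; rewrite -gQE.
exact: measurable_kernel.
Qed.

Lemma Rint_ind (mu : probability X R) (B : set X) : measurable B ->
  Rintegral mu setT (\1_B) = pr mu B.
Proof. by move=> mB; rewrite /Rintegral integral_indic // setIT. Qed.

Lemma gQC x A : measurable A -> gQ (~` A) x = 1 - gQ A x.
Proof.
move=> mA; have := measureU (Q x) mA (measurableC mA).
rewrite setUv setICr => /(_ erefl) h.
have h2 : ((gQ A x + gQ (~` A) x)%:E = 1)%E.
  rewrite EFinD -gQE // -gQE; last exact: measurableC.
  by apply: eq_trans (esym h) (@prob_kernel _ _ _ _ _ Q x).
by case: h2 => h2; lra.
Qed.

Lemma contract (mu mu' : probability X R) n (eps d : R) A :
  close mu mu' d -> pr mu (~` Xn n) <= eps -> pr mu' (~` Xn n) <= eps ->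
  measurable A ->
  `|Rintegral mu setT (gQ A) - Rintegral mu' setT (gQ A)| <=
    (1 - alpha n) * d + 2 * alpha n * eps.
Proof.
move=> cm e1 e2 mA.
set a := alpha n; have /andP[a0 a1] := alpha_range n.
set c := pr (nu n) A.
have c0 : 0 <= c := pr_ge0 _ mA.
have c1 : c <= 1 := pr_le1 _ mA.
have mXC := measurableC (mXn n).
have lowb x : Xn n x -> a * c <= gQ A x.
  move=> xX; have := minor xX mA; rewrite gQE //.
  have -> : nu n A = c%:E by exact: prE.
  by rewrite -EFinM lee_fin.
have upb x : Xn n x -> gQ A x <= 1 - a + a * c.
  move=> xX; have := minor xX (measurableC mA); rewrite gQE ?gQC //; last exact: measurableC.
  have -> : nu n (~` A) = (1 - c)%:E by rewrite (prE _ (measurableC mA)) pr_setC.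
  rewrite -EFinM lee_fin -/a => h; lra.
pose k1 x := \1_(Xn n) x * ((gQ A x - a * c) / (1 - a)) + \1_(~` Xn n) x * gQ A x.
pose j x := \1_(~` Xn n) x * k1 x.
have k01 x : 0 <= k1 x <= 1.
  rewrite /k1; case: (pselect (Xn n x)) => xX.
    rewrite ind1 // ind0 /=; last by apply.
    rewrite mul1r mul0r addr0.
    have := lowb x xX; have := upb x xX => u l.
    have [->|a1'] := eqVneq a 1.
      by rewrite subrr invr0 mulr0 lexx ler01.
    have a1'' : 0 < 1 - a by rewrite subr_gt0 lt_neqAle a1' a1.
    apply/andP; split; first by rewrite divr_ge0 ?subr_ge0 // ltW.
    by rewrite ler_pdivrMr // mul1r; lra.
  rewrite ind0 // ind1 //= mul0r add0r mul1r.
  exact: gQ01.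
have dec x : gQ A x = a * c * \1_(Xn n) x + (1 - a) * k1 x + a * j x.
  rewrite /j /k1; case: (pselect (Xn n x)) => xX.
    rewrite ind1 // ind0 /=; last by apply.
    have := lowb x xX; have := upb x xX => u l.
    have [a1e|a1'] := eqVneq a 1.
      rewrite a1e subrr invr0 !mulr0 !mul0r !addr0 mulr1.
      by rewrite a1e in u l; lra.
    rewrite !mul0r !mul1r !addr0 !mulr0 addr0.
    rewrite [(1 - a) * _]mulrC divfK; first by ring.
    by rewrite subr_eq0 eq_sym.
  rewrite ind0 // ind1 //=.
  by rewrite !mul0r !mul1r !mulr0 !add0r; ring.
have j01 x : 0 <= j x <= \1_(~` Xn n) x.
  rewrite /j; case: (pselect (Xn n x)) => xX.
    by rewrite ind0 /= ?mul0r ?lexx //; apply.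
  by rewrite ind1 // mul1r; have := k01 x.
have mk1 : measurable_fun setT k1.
  apply: measurable_realfun.measurable_funD.
    apply: measurable_realfun.measurable_funM.
      exact: measurable_realfun.measurable_indic.
    apply: measurable_realfun.measurable_funM; last exact: measurable_cst.
    apply: measurable_realfun.measurable_funB; first exact: mgQ.
    exact: measurable_cst.
  apply: measurable_realfun.measurable_funM.
    exact: measurable_realfun.measurable_indic.
  exact: mgQ.
have mj : measurable_fun setT j.
  by apply: measurable_realfun.measurable_funM; [exact: measurable_realfun.measurable_indic|].
have bk1 x : `|k1 x| <= 1 by have /andP[? ?] := k01 x; rewrite ger0_norm.
have bj x : `|j x| <= 1.
  have /andP[? h] := j01 x; rewrite ger0_norm //; apply: le_trans h _.
  by rewrite indicE; case: (_ \in _).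
have bI (B : set X) x : `|\1_B x| <= 1 :> R by rewrite indicE; case: (_ \in _); rewrite ?normr1 ?normr0.
have lin (m : probability X R) : Rintegral m setT (gQ A) =
    a * c * pr m (Xn n) + (1 - a) * Rintegral m setT k1 + a * Rintegral m setT j.
  rewrite (eq_Rintegral _ (fun x _ => dec x)).
  have mI := @measurable_realfun.measurable_indic _ _ R setT _ (mXn n).
  rewrite RintegralD //; last 2 first.
  - apply: (@bint _ _ _ _ (`|a * c| + `|1 - a|)).
      apply: measurable_realfun.measurable_funD.
        by apply: measurable_realfun.measurable_funM => //; exact: measurable_cst.
      by apply: measurable_realfun.measurable_funM => //; exact: measurable_cst.
    move=> x; apply: le_trans (ler_normD _ _) _; rewrite !normrM.
    by apply: lerD; rewrite -[X in _ <= X]mulr1 ler_wpM2l.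
  - apply: (@bint _ _ _ _ `|a|).
      by apply: measurable_realfun.measurable_funM => //; exact: measurable_cst.
    by move=> x; rewrite normrM -[X in _ <= X]mulr1 ler_wpM2l.
  rewrite RintegralD //; last 2 first.
  - apply: (@bint _ _ _ _ `|a * c|).
      by apply: measurable_realfun.measurable_funM => //; exact: measurable_cst.
    by move=> x; rewrite normrM -[X in _ <= X]mulr1 ler_wpM2l.
  - apply: (@bint _ _ _ _ `|1 - a|).
      by apply: measurable_realfun.measurable_funM => //; exact: measurable_cst.
    by move=> x; rewrite normrM -[X in _ <= X]mulr1 ler_wpM2l.
  rewrite !RintegralZl //; [|exact: bint mk1 bk1|exact: bint mj bj|exact: bint mI (bI _)].
  by rewrite Rint_ind.
have jb (m : probability X R) : 0 <= Rintegral m setT j <= pr m (~` Xn n).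
  apply/andP; split; first by apply: Rintegral_ge0 => x _; have /andP[] := j01 x.
  have mI := @measurable_realfun.measurable_indic _ _ R setT _ mXC.
  rewrite -Rint_ind //; apply: le_Rintegral => //; [exact: bint mj bj|exact: bint mI (bI _)|].
  by move=> x _; have /andP[] := j01 x.
have hk := layer cm mk1 k01.
have pX (m : probability X R) : pr m (Xn n) = 1 - pr m (~` Xn n).
  by rewrite -pr_setC // setCK.
rewrite !lin !pX.
have u0 := pr_ge0 mu mXC; have u0' := pr_ge0 mu' mXC.
have /andP[q0 q1] := jb mu; have /andP[q0' q1'] := jb mu'.
move: hk; rewrite ler_norml => /andP[hk1 hk2].
set u := pr mu _ in u0 q1 e1 *; set u' := pr mu' _ in u0' q1' e2 *.
set p := Rintegral mu _ _ in hk1 hk2 *; set p' := Rintegral mu' _ _ in hk1 hk2 *.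
set q := Rintegral mu _ _ in q0 q1 *; set q' := Rintegral mu' _ _ in q0' q1' *.
have cu1 : c * u' <= u' by rewrite -[X in _ <= X]mul1r ler_wpM2r.
have cu2 : 0 <= c * u by rewrite mulr_ge0.
have cu3 : c * u <= u by rewrite -[X in _ <= X]mul1r ler_wpM2r.
have cu4 : 0 <= c * u' by rewrite mulr_ge0.
have [hc1 hc2] : -eps <= c * (u' - u) /\ c * (u' - u) <= eps by rewrite mulrBr; split; lra.
have a0' : 0 <= a by exact: ltW.
have a1' : 0 <= 1 - a by rewrite subr_ge0.
have t1 := ler_wpM2l a0' hc1; have t2 := ler_wpM2l a0' hc2.
have t3 := ler_wpM2l a1' hk1; have t4 := ler_wpM2l a1' hk2.
have [hq1 hq2] : -eps <= q - q' /\ q - q' <= eps by split; lra.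
have t5 := ler_wpM2l a0' hq1; have t6 := ler_wpM2l a0' hq2.
rewrite ler_norml; apply/andP; split; lra.
Qed.

Hypothesis Xn_incr : forall n, Xn n `<=` Xn n.+1.

Definition evol (m : nat -> probability X R) := forall t A, measurable A ->
  m t.+1 A = (\int[m t]_x Q x A)%E.

Definition tight (m : nat -> probability X R) :=
  forall e : R, 0 < e -> exists n, forall t, pr (m t) (~` Xn n) <= e.

Lemma evol_pr m t A : evol m -> measurable A ->
  pr (m t.+1) A = Rintegral (m t) setT (gQ A).
Proof.
move=> ev mA; rewrite /pr ev // /Rintegral; congr fine.
by apply: eq_integral => x _; exact: gQE.
Qed.

Lemma iter_close (m m' : nat -> probability X R) n eps :
  evol m -> evol m' -> (forall t, pr (m t) (~` Xn n) <= eps) ->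
  (forall t, pr (m' t) (~` Xn n) <= eps) -> 0 <= eps ->
  forall t, close (m t) (m' t) ((1 - alpha n) ^+ t + 2 * eps).
Proof.
move=> ev ev' e e' e0; elim => [|t IH] A mA.
  rewrite expr0; have := pr_ge0 (m 0%N) mA; have := pr_le1 (m 0%N) mA.
  have := pr_ge0 (m' 0%N) mA; have := pr_le1 (m' 0%N) mA => *.
  rewrite ler_norml; apply/andP; split; lra.
rewrite !evol_pr //; apply: le_trans (contract IH (e t) (e' t) mA) _.
by rewrite exprS; lra.
Qed.

Lemma Xn_mono n k : (n <= k)%N -> Xn n `<=` Xn k.
Proof.
elim: k => [|k IH]; first by rewrite leqn0 => /eqP ->.
rewrite leq_eqVlt => /orP[/eqP -> //|]; rewrite ltnS => /IH h.
by move=> x /h; exact: Xn_incr.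
Qed.

Lemma pr_le (m : probability X R) (A B : set X) : measurable A -> measurable B ->
  A `<=` B -> pr m A <= pr m B.
Proof.
by move=> mA mB AB; rewrite -lee_fin -prE // -prE //; apply: le_measure => //; rewrite inE.
Qed.

Lemma tight_mono (m : probability X R) n k : (n <= k)%N ->
  pr m (~` Xn k) <= pr m (~` Xn n).
Proof.
move=> nk; apply: pr_le; try exact: measurableC.
by apply: subsetC; exact: Xn_mono.
Qed.

Lemma geo (a e : R) : 0 < a <= 1 -> 0 < e ->
  exists T, forall t, (T <= t)%N -> (1 - a) ^+ t <= e.
Proof.
move=> /andP[a0 a1] e0.
have h : `|1 - a| < 1 by rewrite ger0_norm ?subr_ge0 // ltrBlDr ltrDl.
have [T0 _ HT] := (cvgrPdist_le _ _).1 (cvg_expr h) e e0.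
exists T0 => t Tt; have := HT t Tt; rewrite /= sub0r normrN.
exact: le_trans (ler_norm _).
Qed.

Lemma close_le (m m' : probability X R) d d' : d <= d' -> close m m' d -> close m m' d'.
Proof. by move=> dd c A mA; apply: le_trans (c A mA) dd. Qed.

Lemma uconv (m m' : nat -> probability X R) :
  evol m -> evol m' -> tight m -> tight m' ->
  forall e, 0 < e -> exists T, forall t, (T <= t)%N -> close (m t) (m' t) e.
Proof.
move=> ev ev' tm tm' e e0.
have e4 : 0 < e / 4 by rewrite divr_gt0.
have [n1 h1] := tm _ e4; have [n2 h2] := tm' _ e4.
pose n := maxn n1 n2.
have b1 t : pr (m t) (~` Xn n) <= e / 4.
  by apply: le_trans (h1 t); apply: tight_mono; exact: leq_maxl.
have b2 t : pr (m' t) (~` Xn n) <= e / 4.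
  by apply: le_trans (h2 t); apply: tight_mono; exact: leq_maxr.
have e2 : 0 < e / 2 by rewrite divr_gt0.
have [T0 HT] := geo (alpha_range n) e2.
exists T0 => t Tt; apply: close_le (iter_close ev ev' b1 b2 (ltW e4) t).
by have := HT t Tt; lra.
Qed.

Definition shift (m : nat -> probability X R) s := fun t => m (t + s)%N.

Lemma ucauchy (m : nat -> probability X R) : evol m -> tight m ->
  forall e, 0 < e -> exists T, forall t s, (T <= t)%N -> close (m t) (m (t + s)%N) e.
Proof.
move=> ev tm e e0.
have e4 : 0 < e / 4 by rewrite divr_gt0.
have [n h1] := tm _ e4.
have e2 : 0 < e / 2 by rewrite divr_gt0.
have [T0 HT] := geo (alpha_range n) e2.
exists T0 => t s Tt.
have evs : evol (shift m s) by move=> u A mA; exact: ev.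
have := iter_close ev evs h1 (fun u => h1 (u + s)%N) (ltW e4) t.
by apply: close_le; have := HT t Tt; lra.
Qed.

End Contract.

Section LimMeasure.
Context (R : realType) (T : ptopologicalType).
Local Notation X := (Borel T).
Variable m : nat -> probability X R.
Hypothesis mc : forall e : R, 0 < e -> exists T0, forall t s, (T0 <= t)%N ->
  close (m t) (m (t + s)%N) e.

Definition limA (A : set X) : R := limn (fun t => pr (m t) A).

Lemma cvgA A : measurable A -> cvgn (fun t => pr (m t) A).
Proof.
move=> mA; apply: cauchy_cvg; apply: cauchy_exP => e e0.
have e2 : 0 < e / 2 by rewrite divr_gt0.
have [T0 HT] := mc e2.
exists (pr (m T0) A); exists T0 => // n Tn /=.
have := HT T0 (n - T0)%N (leqnn T0) A mA; rewrite subnKC //.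
rewrite /ball /= => h; apply: le_lt_trans h _.
by rewrite ltr_pdivrMr // ltr_pMr // ltr1n.
Qed.

Lemma lim_unif e : 0 < e -> exists T0, forall t A, (T0 <= t)%N -> measurable A ->
  `|pr (m t) A - limA A| <= e.
Proof.
move=> e0; have [T0 HT] := mc e0; exists T0 => t A Tt mA.
have near_b : \forall s \near \oo, `|pr (m t) A - pr (m s) A| <= e.
  exists t => // s ts /=; have := HT t (s - t)%N Tt A mA; rewrite subnKC //.
rewrite ler_norml; apply/andP; split.
  rewrite lerBrDl -lerBrDr; apply: limr_le; first exact: cvgA.
  by apply: filterS near_b => s; rewrite ler_norml => /andP[h _]; lra.
rewrite lerBlDl -lerBlDr; apply: limr_ge; first exact: cvgA.
by apply: filterS near_b => s; rewrite ler_norml => /andP[_ h]; lra.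
Qed.

Definition LM (A : set X) : \bar R := (limA A)%:E.

Lemma pr_ge0' (mu : probability X R) A : 0 <= pr mu A.
Proof. exact/fine_ge0/measure_ge0. Qed.

Lemma LM0 : LM set0 = 0%E.
Proof.
rewrite /LM /limA; congr EFin.
have -> : (fun t => pr (m t) set0) = fun _ => 0.
  by apply/funext => t; rewrite /pr measure0.
exact: lim_cst.
Qed.

Lemma LM_ge0 A : (0 <= LM A)%E.
Proof.
rewrite /LM lee_fin /limA.
have [cA|ncA] := pselect (cvgn (fun t => pr (m t) A)).
  by apply: limr_ge => //; exists 0%N => // t _; exact: pr_ge0'.
by rewrite dvgP.
Qed.

Lemma LM_sigma : semi_sigma_additive LM.
Proof.
move=> F mF tF mU.
pose B N := \big[setU/set0]_(i < N) F i.
have mB N : measurable (B N) by apply: bigsetU_measurable => i _; exact: mF.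
have prB t N : pr (m t) (B N) = \sum_(i < N) pr (m t) (F i).
  rewrite /pr /B measure_bigsetU // -EFin_sum_fine //.
  by move=> i _; exact: fin_num_measure.
have limB N : limA (B N) = \sum_(i < N) limA (F i).
  rewrite /limA; under eq_fun do rewrite prB.
  apply: norm_cvg_lim; elim: N => [|N IH].
    under eq_fun do rewrite big_ord0; rewrite big_ord0; exact: cvg_cst.
  under eq_fun do rewrite big_ord_recr /=; rewrite big_ord_recr /=.
  by apply: cvgD => //; exact: cvgA.
have semi t : (fun N => \sum_(i < N) pr (m t) (F i)) @ \oo --> pr (m t) (\bigcup_n F n).
  have h : (fun n => \sum_(0 <= i < n) m t (F i)) @ \oo -->
      (pr (m t) (\bigcup_n F n))%:E.
    rewrite -prE //; exact: (@measure_semi_sigma_additive _ _ _ (m t) F mF tF mU).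
  have -> : (fun N => \sum_(i < N) pr (m t) (F i)) =
      fine \o (fun n => \sum_(0 <= i < n) m t (F i)).
    apply/funext => N /=; rewrite big_mkord -EFin_sum_fine //.
    by move=> i _; exact: fin_num_measure.
  exact: fine_cvg h.
rewrite /LM; under eq_fun do rewrite sumEFin.
apply: cvg_EFin; first by exists 0%N.
apply/cvgrPdist_le => e e0.
have e3 : 0 < e / 3 by rewrite divr_gt0.
have [T0 HT] := lim_unif e3.
have [N0 _ HN] := (cvgrPdist_le _ _).1 (semi T0) _ e3.
exists N0 => // N NN /=.
have h1 := HT T0 _ (leqnn T0) mU.
have h2 := HT T0 _ (leqnn T0) (mB N).
have h3 := HN N NN; rewrite /= in h3.
rewrite big_mkord -limB.
rewrite -prB in h3.
move: h1 h2 h3; rewrite !ler_norml => /andP[? ?] /andP[? ?] /andP[? ?].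
apply/andP; split; lra.
Qed.

Lemma LM_setT : LM setT = 1%E.
Proof.
rewrite /LM /limA; congr EFin.
have -> : (fun t => pr (m t) setT) = fun _ => 1 by apply/funext => t; exact: prT.
exact: lim_cst.
Qed.

End LimMeasure.

Section LimProb.
Context (R : realType) (T : ptopologicalType).
Local Notation X := (Borel T).

Definition ucauchyP (m : nat -> probability X R) := forall e : R, 0 < e ->
  exists T0, forall t s, (T0 <= t)%N -> close (m t) (m (t + s)%N) e.

Definition LMp (m : nat -> probability X R) (mc : ucauchyP m) := LM m.

HB.instance Definition _ m mc := isMeasure.Build _ _ _ (@LMp m mc)
  (LM0 m) (@LM_ge0 _ _ m) (LM_sigma mc).

HB.instance Definition _ m mc := Measure_isProbability.Build _ _ _ (@LMp m mc)
  (LM_setT m).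

Lemma LMp_unif m (mc : ucauchyP m) e : 0 < e -> exists T0, forall t, (T0 <= t)%N ->
  close (m t) (@LMp m mc : probability X R) e.
Proof.
move=> e0; have [T0 HT] := lim_unif mc e0.
by exists T0 => t Tt A mA; exact: HT.
Qed.

End LimProb.

Section Law.
Context (R : realType) (T : ptopologicalType).
Local Notation X := (Borel T).
Context dO (Omega : measurableType dO) (P : probability Omega R)
  (Y : nat -> Omega -> X).

Definition lawp (mY : forall t, measurable_fun setT (Y t)) (t : nat) :
  set X -> \bar R := pushforward P (Y t).

Section inst.
Variables (mY : forall t, measurable_fun setT (Y t)) (t : nat).

Let law0 : lawp mY t set0 = 0%E.
Proof. by rewrite /lawp /pushforward preimage_set0 measure0. Qed.

Let law_ge0 A : (0 <= lawp mY t A)%E.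
Proof. exact: measure_ge0. Qed.

Let law_sigma : semi_sigma_additive (lawp mY t).
Proof.
move=> F mF tF mUF; rewrite /lawp /pushforward preimage_bigcup.
apply: measure_semi_sigma_additive.
- by move=> n; rewrite -[X in measurable X]setTI; exact: mY.
- apply/trivIsetP => /= i j _ _ ij; rewrite -preimage_setI.
  by move/trivIsetP : tF => /(_ _ _ _ _ ij) ->//; rewrite preimage_set0.
- by rewrite -preimage_bigcup -[X in measurable X]setTI; exact: mY.
Qed.

HB.instance Definition _ := isMeasure.Build _ _ _ (lawp mY t) law0 law_ge0 law_sigma.

Let law_setT : lawp mY t setT = 1%E.
Proof. by rewrite /lawp /pushforward preimage_setT probability_setT. Qed.

HB.instance Definition _ := Measure_isProbability.Build _ _ _ (lawp mY t) law_setT.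
End inst.

End Law.

Section Final.
Context (R : realType) (T : ptopologicalType).
Local Notation X := (Borel T).

Lemma markov_evol (Q : R.-pker X ~> X) dO (Omega : measurableType dO)
  (P : probability Omega R) (Y : nat -> Omega -> X) (mc : markov_chain Q P Y) :
  evol Q (lawp P mc.1).
Proof.
move=> t A mA.
have := mc.2 t (fun _ => setT) A (fun _ => measurableT) mA.
have -> : [set w | forall s, (s <= t)%N -> [set: X] (Y s w)] = setT.
  by apply/seteqP; split.
rewrite setTI => h.
transitivity (\int[P]_(w in setT) Q (Y t w) A)%E; first exact: h.
rewrite /= /lawp ge0_integral_pushforward //; first exact: mc.1.
exact: measurable_kernel.
Qed.

Lemma pb_tight (Q : R.-pker X ~> X) (Xn : nat -> set X)
  (mXn : forall n, measurable (Xn n)) dO (Omega : measurableType dO)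
  (P : probability Omega R) (Y : nat -> Omega -> X) (mc : markov_chain Q P Y) :
  Pb Q Xn (pushforward P (Y 0%N)) -> tight Xn (lawp P mc.1).
Proof.
move=> pb e e0.
have := pb _ _ P Y mc (fun A mA => erefl).
move/fine_cvgP => [fin cv].
have [N _ HN] := (cvgrPdist_le _ _).1 cv e e0.
have [N' _ HF] := fin.
exists (maxn N N') => t.
have Sf := HF _ (leq_maxr N N'); have Sb := HN _ (leq_maxl N N').
rewrite /= sub0r normrN in Sb.
rewrite -lee_fin -prE; last exact: measurableC.
apply: (@le_trans _ _ (ereal_sup [set P (Y t0 @^-1` ~` Xn (maxn N N')) | t0 in [set: nat]])).
  by apply: ereal_sup_ubound; exists t.
rewrite -(fineK Sf) lee_fin; exact: le_trans (ler_norm _) Sb.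
Qed.

Lemma tv_bound (mu mu' : probability X R) d : close mu mu' d ->
  (0 <= tv_dist mu mu')%E /\ (tv_dist mu mu' <= (2 * d)%:E)%E.
Proof.
move=> c; split.
  rewrite /tv_dist; apply: le_trans (_ : 0 <= `| \int[mu]_x ((fun _ : X => 0 : R) x)%:E - \int[mu']_x ((fun _ : X => 0 : R) x)%:E |)%E _.
    exact: abse_ge0.
  apply: ereal_sup_ubound; exists (fun _ => 0) => //; split.
    exact: measurable_cst.
  by move=> x; rewrite normr0 ler01.
apply: ge_ereal_sup => _ [phi [mphi phi1] <-].
pose h x := (phi x + 1) / 2.
have mh : measurable_fun setT h.
  apply: measurable_realfun.measurable_funM; last exact: measurable_cst.
  by apply: measurable_realfun.measurable_funD => //; exact: measurable_cst.
have h01 x : 0 <= h x <= 1.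
  have := phi1 x; rewrite ler_norml => /andP[? ?].
  by rewrite /h ler_pdivrMr // ler_pdivlMr // mul0r mul1r; apply/andP; split; lra.
have hb x : `|h x| <= 1 by have /andP[? ?] := h01 x; rewrite ger0_norm.
have Ephi (m : probability X R) : (\int[m]_x (phi x)%:E = (2 * Rintegral m setT h - 1)%:E)%E.
  have ip : m.-integrable setT (EFin \o phi) := bint m mphi phi1.
  rewrite -[LHS]fineK; last exact: integrable_fin_num.
  congr EFin; rewrite -/(Rintegral m setT phi).
  have ephi x : phi x = 2 * h x - 1 by rewrite /h; field.
  rewrite (eq_Rintegral _ (fun x _ => ephi x)).
  rewrite RintegralB //; last 2 first.
    apply: (@bint _ _ _ _ 2); first by apply: measurable_realfun.measurable_funM => //; exact: measurable_cst.
    by move=> x; rewrite normrM ger0_norm // -[X in _ <= X]mulr1 ler_wpM2l.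
    by apply: (@bint _ _ _ _ 1); [exact: measurable_cst|move=> x; rewrite normr1].
  by rewrite RintegralZl ?Rint_cst //; exact: bint mh hb.
rewrite !Ephi -EFinB /= lee_fin.
have := layer c mh h01.
have -> : 2 * Rintegral mu setT h - 1 - (2 * Rintegral mu' setT h - 1) =
  2 * (Rintegral mu setT h - Rintegral mu' setT h) by ring.
by rewrite normrM [`|2|]ger0_norm // => hl; rewrite ler_wpM2l.
Qed.

End Final.

Theorem mainTheorem1 (R : realType) (T : ptopologicalType)
  (HT : polish R T)
  (Q : R.-pker (Borel T) ~> (Borel T))
  (Xn : nat -> set (Borel T))
  (mXn : forall n, measurable (Xn n))
  (Xn_incr : forall n, Xn n `<=` Xn n.+1)
  (Xn0 : Xn 0%N !=set0)
  (alpha : nat -> R)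
  (alpha_range : forall n, 0 < alpha n <= 1)
  (alpha_decr : forall n, alpha n.+1 <= alpha n)
  (nu : nat -> probability (Borel T) R)
  (minor : forall n x A, Xn n x -> measurable A ->
             ((alpha n)%:E * nu n A <= Q x A)%E) :
  exists mu_star : probability (Borel T) R,
    forall dO (Omega : measurableType dO) (P : probability Omega R)
           (Y : nat -> Omega -> Borel T),
      markov_chain Q P Y ->
      Pb Q Xn (pushforward P (Y 0%N)) ->
      (fun t => tv_dist (pushforward P (Y t)) mu_star) @ \oo --> 0%E.
Proof.
have [[m0 [ev0 tm0]]|nex] := pselect (exists m : nat -> probability (Borel T) R,
  evol Q m /\ tight Xn m); last first.
  exists (nu 0%N) => dO Omega P Y mc pb; exfalso; apply: nex.
  exists (lawp P mc.1); split; [exact: markov_evol | exact: pb_tight].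
have mc0 : ucauchyP m0.
  by move=> e e0; exact: (ucauchy mXn alpha_range minor ev0 tm0 e0).
exists (LMp mc0 : probability _ _) => dO Omega P Y mc pb.
have ev := markov_evol mc; have tm := pb_tight mXn mc pb.
set m := lawp P mc.1 in ev tm.
have key e : 0 < e -> exists T0, forall t, (T0 <= t)%N ->
    close (m t) (LMp mc0 : probability _ _) e.
  move=> e0; have e2 : 0 < e / 2 by rewrite divr_gt0.
  have [T1 H1] := uconv mXn alpha_range minor Xn_incr ev ev0 tm tm0 e2.
  have [T2 H2] := LMp_unif mc0 e2.
  exists (maxn T1 T2) => t Tt A mA.
  have := H1 t (leq_trans (leq_maxl _ _) Tt) A mA.
  have := H2 t (leq_trans (leq_maxr _ _) Tt) A mA.
  rewrite !ler_norml => /andP[? ?] /andP[? ?].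
  by apply/andP; split; lra.
have bnd e : 0 < e -> exists T0, forall t, (T0 <= t)%N ->
    (0 <= tv_dist (pushforward P (Y t)) (LMp mc0 : probability _ _))%E /\
    (tv_dist (pushforward P (Y t)) (LMp mc0 : probability _ _) <= (2 * e)%:E)%E.
  move=> e0; have [T0 H] := key e e0; exists T0 => t Tt.
  exact: (tv_bound (H t Tt)).
apply/fine_cvgP; split.
  have [T0 H] := bnd 1 ltr01; exists T0 => // t Tt /=.
  have [h1 h2] := H t Tt.
  by rewrite ge0_fin_numE // (le_lt_trans h2) // ltry.
apply/cvgrPdist_le => e e0.
have e2 : 0 < e / 2 by rewrite divr_gt0.
have [T0 H] := bnd _ e2; exists T0 => // t Tt /=.
have [h1 h2] := H t Tt.
rewrite sub0r normrN ger0_norm; last exact: fine_ge0.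
have -> : e = 2 * (e / 2) by field.
by rewrite -lee_fin fineK // ge0_fin_numE // (le_lt_trans h2) // ltry.
Qed.
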